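(* Let $a,k,d,e$ be integers with $0\le a\le k$, $1\le d\le k$, and $e=d$ or $2e=d$. Then for all integers $m,n\ge0$, $${}_d\overline{b}_{dk+e,\,da+d}(m,n)-{}_d\overline{b}_{dk+e,\,da}(m,n)={}_db_{dk+e,\,dk-da+e}(m-da,\,n-m).$$
   Context: Partitions are finite non-increasing sequences of positive integers; $\phi_i$ is the number of occurrences of $i$ as a part. For an integer $N$ and integers $m,n$, ${}_db_{dk+e,N}(m,n)$ is the number of partitions of $n$ into exactly $m$ parts with $\phi_i+\phi_{i+1}<dk+e$ for all $i\ge1$, $\phi_1<N$, and $d\mid\phi_{2i}$ for all $i\ge1$; ${}_d\overline{b}_{dk+e,N}(m,n)$ is the number of partitions of $n$ into exactly $m$ parts with $\phi_i+\phi_{i+1}<dk+e$ for all $i\ge1$, $\phi_1<N$, and $d\mid\phi_{2i+1}$ for all $i\ge0$. Both counts are $0$ when $m<0$ or $n<0$. *)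

(* Defs.v *)
From HB Require Import structures.
From mathcomp Require Import all_boot all_order all_algebra.
Set Implicit Arguments. Unset Strict Implicit. Unset Printing Implicit Defensive.

(* A partition of n is encoded by its multiplicity vector
   f : {ffun 'I_n -> 'I_n.+1}, where f j is the multiplicity phi_(j+1)
   of the part j+1 (every part is <= n and every multiplicity is <= n,
   so this encoding is a bijection onto the partitions of n). *)
Definition mult (n : nat) (f : {ffun 'I_n -> 'I_n.+1}) (i : nat) : nat :=
  if i is i'.+1 then
    (if insub i' is Some j then nat_of_ord (f j) else 0)
  else 0.

(* The conditions shared by both families: f is a partition of n into
   exactly m parts, phi_i + phi_(i+1) < K for all i >= 1, phi_1 < N.
   (For i > n+1 both multiplicities vanish, so checking i <= n+1 suffices
   -- together with K > 0 encoded by i = n+1.) *)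
Definition base_cond (K N m n : nat) (f : {ffun 'I_n -> 'I_n.+1}) : bool :=
  [&& \sum_(1 <= i < n.+1) i * mult f i == n,
      \sum_(1 <= i < n.+1) mult f i == m,
      [forall i : 'I_n.+2, (1 <= i) ==> (mult f i + mult f i.+1 < K)]
    & mult f 1 < N].

Definition even_div (d n : nat) (f : {ffun 'I_n -> 'I_n.+1}) : bool :=
  [forall i : 'I_n.+1, (1 <= i) ==> (d %| mult f (2 * i))].

Definition odd_div (d n : nat) (f : {ffun 'I_n -> 'I_n.+1}) : bool :=
  [forall i : 'I_n.+1, d %| mult f (2 * i).+1].

(* {}_d b_{K,N}(m,n), with m n integers; 0 if m < 0 or n < 0 *)
Definition b_count (d K N : nat) (m n : int) : nat :=
  match m, n with
  | Posz m', Posz n' =>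
      #|[pred f : {ffun 'I_n' -> 'I_n'.+1} | base_cond K N m' f && even_div d f]|
  | _, _ => 0
  end.

Definition bbar_count (d K N : nat) (m n : int) : nat :=
  match m, n with
  | Posz m', Posz n' =>
      #|[pred f : {ffun 'I_n' -> 'I_n'.+1} | base_cond K N m' f && odd_div d f]|
  | _, _ => 0
  end.

(* Main.v *)
Require Import Defs.
From HB Require Import structures.
From mathcomp Require Import all_boot all_order all_algebra.
From mathcomp Require Import zify.
Import GRing.Theory Num.Theory.
Set Implicit Arguments. Unset Strict Implicit. Unset Printing Implicit Defensive.

Lemma mult0 n (f : {ffun 'I_n -> 'I_n.+1}) : mult f 0 = 0.
Proof. by []. Qed.

Lemma multE n (f : {ffun 'I_n -> 'I_n.+1}) (j : 'I_n) : mult f j.+1 = f j.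
Proof.
rewrite /mult; case: insubP => [j' _ Hj|Hn]; last by rewrite ltn_ord in Hn.
by congr (nat_of_ord (f _)); apply: val_inj.
Qed.

Lemma mult_out n (f : {ffun 'I_n -> 'I_n.+1}) i : n < i -> mult f i = 0.
Proof.
case: i => // i Hi; rewrite /mult; case: insubP => // j _ Hj.
have := ltn_ord j; rewrite Hj; lia.
Qed.

Lemma mult_le n (f : {ffun 'I_n -> 'I_n.+1}) i : mult f i <= n.
Proof.
case: i => [|i]; first by [].
case: (ltnP i n) => H; last by rewrite mult_out.
by rewrite (multE f (Ordinal H)) -ltnS ltn_ord.
Qed.

Lemma mult_inj n (f g : {ffun 'I_n -> 'I_n.+1}) :
  (forall i, mult f i = mult g i) -> f = g.
Proof. by move=> H; apply/ffunP => j; apply: val_inj; rewrite /= -!multE. Qed.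

Lemma forall_natP B (P : nat -> bool) :
  (forall i, B <= i -> P i) -> reflect (forall i, P i) [forall i : 'I_B, P i].
Proof.
move=> H; apply: (iffP forallP) => [H' i|H' i //].
case: (ltnP i B) => [lt|ge]; [exact: (H' (Ordinal lt)) | exact: H].
Qed.

Definition Pbase K N m n (F : nat -> nat) :=
  [/\ \sum_(1 <= i < n.+1) i * F i = n, \sum_(1 <= i < n.+1) F i = m,
      (forall i, 1 <= i -> F i + F i.+1 < K) & F 1 < N].

Lemma base_condP K N m n (f : {ffun 'I_n -> 'I_n.+1}) :
  0 < K -> reflect (Pbase K N m n (mult f)) (base_cond K N m f).
Proof.
move=> K0; rewrite /base_cond.
have Hs : forall i, n.+2 <= i -> (1 <= i) ==> (mult f i + mult f i.+1 < K).
  by move=> i Hi; rewrite !mult_out //; lia.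
apply: (iffP and4P) => [[/eqP H1 /eqP H2 H3 H4]|[H1 H2 H3 H4]]; split => //.
- move=> i Hi; move/(forall_natP Hs): H3 => H3; by have := H3 i; rewrite Hi.
- by apply/eqP.
- by apply/eqP.
- by apply/(forall_natP Hs) => i; apply/implyP; apply: H3.
Qed.

Lemma odd_divP d n (f : {ffun 'I_n -> 'I_n.+1}) :
  reflect (forall i, d %| mult f (2 * i).+1) (odd_div d f).
Proof.
apply: forall_natP => i Hi; rewrite mult_out ?dvdn0 //; lia.
Qed.

Lemma even_divP d n (f : {ffun 'I_n -> 'I_n.+1}) :
  reflect (forall i, 1 <= i -> d %| mult f (2 * i)) (even_div d f).
Proof.
have Hs : forall i, n.+1 <= i -> (1 <= i) ==> (d %| mult f (2 * i)).
  by move=> i Hi; rewrite mult_out ?dvdn0 ?implybT //; lia.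
apply: (iffP (forall_natP Hs)) => H i.
- by move=> Hi; have := H i; rewrite Hi.
- by apply/implyP; apply: H.
Qed.

Lemma sum_ext (P : nat -> nat) S C : 1 <= S <= C ->
  (forall i, S <= i -> P i = 0) ->
  \sum_(1 <= i < S) P i = \sum_(1 <= i < C) P i.
Proof.
move=> /andP[H1 H2] Hz; rewrite (big_cat_nat H1 H2) /= [X in _ = _ + X]big_nat_cond [X in _ = _ + X]big1 ?addn0 //.
by move=> i /andP[/andP[Hi _] _]; exact: Hz.
Qed.

Lemma term_le_sum (P : nat -> nat) S i : 1 <= i ->
  (forall j, S <= j -> P j = 0) -> P i <= \sum_(1 <= j < S) P j.
Proof.
move=> H1 Hz; case: (ltnP i S) => H2; last by rewrite Hz.
rewrite (@big_cat_nat _ _ _ i) //=; last exact: ltnW.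
rewrite [X in _ <= _ + X]big_ltn //; exact: leq_trans (leq_addr _ _) (leq_addl _ _).
Qed.

Lemma sum_le_wsum (F : nat -> nat) S :
  \sum_(1 <= i < S) F i <= \sum_(1 <= i < S) i * F i.
Proof.
rewrite big_nat [X in _ <= X]big_nat; apply: leq_sum => i /andP[Hi _].
by rewrite leq_pmull.
Qed.

Lemma sum_shift (F G : nat -> nat) da B : 1 <= B -> G 0 = 0 ->
  (forall i, F i = (i == 1) * da + G i.-1) ->
  \sum_(1 <= i < B.+1) i * F i = da + \sum_(1 <= j < B) j * G j + \sum_(1 <= j < B) G j
  /\ \sum_(1 <= i < B.+1) F i = da + \sum_(1 <= j < B) G j.
Proof.
move=> HB G0 HR.
have L1 : \sum_(1 <= i < B.+1) i * F i = 1 * F 1 + \sum_(1 <= i < B) i.+1 * F i.+1.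
  by rewrite big_ltn // big_add1.
have L0 : \sum_(1 <= i < B.+1) F i = F 1 + \sum_(1 <= i < B) F i.+1.
  by rewrite big_ltn // big_add1.
rewrite L1 L0 HR /= G0.
have E1 : \sum_(1 <= i < B) i.+1 * F i.+1 = \sum_(1 <= j < B) j * G j + \sum_(1 <= j < B) G j.
  rewrite -big_split /=; apply: eq_big_nat => i /andP[Hi _].
  rewrite HR; case: i Hi => // i _ /=; lia.
have E0 : \sum_(1 <= i < B) F i.+1 = \sum_(1 <= j < B) G j.
  apply: eq_big_nat => i /andP[Hi _].
  rewrite HR; case: i Hi => // i _ /=; lia.
rewrite E1 E0; split; lia.
Qed.

Lemma transfer (F G : nat -> nat) n m K d da :
  (forall i, n < i -> F i = 0) -> (forall j, n - m < j -> G j = 0) -> G 0 = 0 ->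
  (forall i, F i = (i == 1) * da + G i.-1) -> da <= m <= n -> da < K -> d %| da -> 0 < d ->
  (Pbase K (da + d) m n F /\ (forall i, d %| F (2*i).+1)) <->
  (Pbase K (K - da) (m - da) (n - m) G /\ (forall i, 1 <= i -> d %| G (2*i))).
Proof.
move=> HF HG G0 HR Hm HK Hd d0.
set B := n + (n - m) + 1.
have HB : 1 <= B by rewrite /B addn1.
have [S1 S0] := sum_shift HB G0 HR.
have EF1 : \sum_(1 <= i < n.+1) i * F i = \sum_(1 <= i < B.+1) i * F i.
  apply: (sum_ext (P := fun i => i * F i)); first by rewrite /B; lia.
  by move=> i Hi; rewrite HF ?muln0.
have EF0 : \sum_(1 <= i < n.+1) F i = \sum_(1 <= i < B.+1) F i.
  apply: (sum_ext (P := F)); first by rewrite /B; lia.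
  by move=> i Hi; rewrite HF.
have EG1 : \sum_(1 <= i < (n - m).+1) i * G i = \sum_(1 <= i < B) i * G i.
  apply: (sum_ext (P := fun i => i * G i)); first by rewrite /B; lia.
  by move=> i Hi; rewrite HG ?muln0.
have EG0 : \sum_(1 <= i < (n - m).+1) G i = \sum_(1 <= i < B) G i.
  apply: (sum_ext (P := G)); first by rewrite /B; lia.
  by move=> i Hi; rewrite HG.
have F1 : F 1 = da by rewrite HR /= G0 addn0 mul1n.
split.
- move=> [[H1 H0 H3 H4] H5]; split; first split.
  + rewrite EG1; lia.
  + rewrite EG0; lia.
  + move=> [|i] // _; have := H3 i.+2 isT; rewrite !HR /=; lia.
  + have := H3 1 isT; rewrite F1 (HR 2) /=; lia.
  + move=> [|i] // _; have := H5 i.+1; by rewrite HR /= mul0n add0n.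
- move=> [[H1 H0 H3 H4] H5]; split; first split.
  + rewrite EF1 S1 -EG1 -EG0; lia.
  + rewrite EF0 S0 -EG0; lia.
  + move=> [|[|i]] // _.
    * rewrite F1 (HR 2) /=; lia.
    * have := H3 i.+1 isT; rewrite !HR /=; lia.
  + rewrite F1; lia.
  + move=> [|i]; first by rewrite muln0 F1.
    by rewrite HR /= mul0n add0n; apply: H5.
Qed.

Lemma down_bound (F G : nat -> nat) n m da :
  (forall i, n < i -> F i = 0) -> G 0 = 0 ->
  (forall i, F i = (i == 1) * da + G i.-1) ->
  \sum_(1 <= i < n.+1) i * F i = n -> \sum_(1 <= i < n.+1) F i = m ->
  forall j, j * G j <= n - m.
Proof.
move=> HF G0 HR H1 H0.
have HGz : forall j, n <= j -> G j = 0.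
  move=> [|j] Hj; first by [].
  by have := HR j.+2; rewrite /= mul0n add0n => <-; rewrite HF.
case: n HF H1 H0 HGz => [|n] HF H1 H0 HGz j.
  by rewrite HGz ?muln0.
have HB : 1 <= n.+1 by [].
have [S1 S0] := sum_shift HB G0 HR.
case: j => [|j]; first by rewrite mul0n.
have := term_le_sum (P := fun j => j * G j) (S := n.+1) (i := j.+1) isT.
have Hz : forall j, n.+1 <= j -> j * G j = 0 by move=> k Hk; rewrite HGz ?muln0.
move=> /(_ Hz); lia.
Qed.

Lemma up_bound K N m' n' (G : nat -> nat) :
  (forall j, n' < j -> G j = 0) -> G 0 = 0 -> Pbase K N m' n' G ->
  forall i, i * G i <= n' /\ G i <= m'.
Proof.
move=> HG G0 [H1 H0 _ _] [|i]; first by rewrite G0.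
have Hz1 : forall j, n'.+1 <= j -> j * G j = 0 by move=> k Hk; rewrite HG ?muln0.
have Hz0 : forall j, n'.+1 <= j -> G j = 0 by move=> k Hk; rewrite HG.
have := term_le_sum (P := fun j => j * G j) (S := n'.+1) (i := i.+1) isT Hz1.
have := term_le_sum (P := G) (S := n'.+1) (i := i.+1) isT Hz0.
lia.
Qed.

Definition down n n' (f : {ffun 'I_n -> 'I_n.+1}) : {ffun 'I_n' -> 'I_n'.+1} :=
  [ffun j : 'I_n' => inord (mult f j.+2)].

Definition up n n' da (g : {ffun 'I_n' -> 'I_n'.+1}) : {ffun 'I_n -> 'I_n.+1} :=
  [ffun j : 'I_n => inord (if val j == 0 then da else mult g j)].

Lemma mult_down n n' (f : {ffun 'I_n -> 'I_n.+1}) :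
  (forall j, mult f j.+2 <= n') -> (forall j, n' <= j -> mult f j.+2 = 0) ->
  forall j, mult (down n' f) j = if j is j'.+1 then mult f j'.+2 else 0.
Proof.
move=> Hb Hz [|j] //.
case: (ltnP j n') => H; last by rewrite mult_out // Hz.
by rewrite (multE _ (Ordinal H)) /down ffunE inordK // ltnS.
Qed.

Lemma mult_up n n' da (g : {ffun 'I_n' -> 'I_n'.+1}) :
  da <= n -> (forall i, mult g i <= n) -> (forall i, n <= i -> 1 <= i -> mult g i = 0) ->
  forall i, mult (up n da g) i = (i == 1) * da + mult g i.-1.
Proof.
move=> Hda Hb Hz [|i] //.
case: (ltnP i n) => H.
  rewrite (multE _ (Ordinal H)) /up ffunE /=.
  case: i H => [|i] H /=.
    by rewrite inordK ?mul1n ?addn0 // ltnS.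
  by rewrite inordK ?mul0n ?add0n // ltnS; exact: (Hb i.+1).
rewrite mult_out //; case: i H => [|i] H /=.
  by rewrite mul1n addn0; lia.
by rewrite mul0n add0n; symmetry; apply: (Hz i.+1).
Qed.

Lemma dvd_eq d x y : 0 < d -> d %| x -> d %| y -> y <= x < y + d -> x = y.
Proof.
move=> d0 Hx Hy /andP[H1 H2].
have Hd : d %| x - y by apply: dvdn_sub.
case E: (x - y) Hd => [|z] Hd; first lia.
have := dvdn_leq (ltn0Sn z) Hd; lia.
Qed.

Definition Dp K d da m n (f : {ffun 'I_n -> 'I_n.+1}) :=
  (base_cond K (da + d) m f && odd_div d f) && ~~ (mult f 1 < da).
Definition Cp K d da m n' (g : {ffun 'I_n' -> 'I_n'.+1}) :=
  base_cond K (K - da) (m - da) g && even_div d g.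

Lemma D_down n m K d da (f : {ffun 'I_n -> 'I_n.+1}) :
  da <= m <= n -> da < K -> d %| da -> 0 < d -> Dp K d da m f ->
  Cp K d da m (down (n - m) f) /\
  (forall i, mult f i = (i == 1) * da + mult (down (n - m) f) i.-1).
Proof.
move=> Hm HK Hd d0 /andP[/andP[Hb Ho] Hlt].
have K0 : 0 < K by lia.
move/(base_condP _ _ _ K0): Hb => Hb; move/odd_divP: Ho => Ho.
have F1 : mult f 1 = da.
  apply: (dvd_eq d0 (Ho 0) Hd); case: Hb => _ _ _ H4; apply/andP; split; [by rewrite leqNgt | exact: H4].
set G0 := fun j => if j is j'.+1 then mult f j'.+2 else 0.
have HR0 : forall i, mult f i = (i == 1) * da + G0 i.-1.
  case=> [|[|i]]; [by [] | by rewrite F1 /= mul1n addn0 | by []].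
have HF : forall i, n < i -> mult f i = 0 by move=> i Hi; rewrite mult_out.
case: (Hb) => H1 H0 _ _.
have Hb2 := down_bound HF (erefl : G0 0 = 0) HR0 H1 H0.
have Hx : forall j, mult f j.+2 <= n - m.
  move=> j; have := Hb2 j.+1; rewrite /G0; nia.
have Hy : forall j, n - m <= j -> mult f j.+2 = 0.
  move=> j Hj; have := Hb2 j.+1; rewrite /G0; nia.
have Md := mult_down Hx Hy.
have HR : forall i, mult f i = (i == 1) * da + mult (down (n - m) f) i.-1.
  by move=> i; rewrite HR0 Md.
split => //.
have HG : forall j, n - m < j -> mult (down (n - m) f) j = 0 by move=> j Hj; rewrite mult_out.
have [Hc He] := (transfer HF HG (erefl _) HR Hm HK Hd d0).1 (conj Hb Ho).
apply/andP; split; [exact/(base_condP _ _ _ K0) | exact/even_divP].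
Qed.

Lemma C_up n m K d da (g : {ffun 'I_(n - m) -> 'I_(n - m).+1}) :
  da <= m <= n -> da < K -> d %| da -> 0 < d -> Cp K d da m g ->
  Dp K d da m (up n da g) /\
  (forall i, mult (up n da g) i = (i == 1) * da + mult g i.-1).
Proof.
move=> Hm HK Hd d0 /andP[Hb He].
have K0 : 0 < K by lia.
move/(base_condP _ _ _ K0): Hb => Hb; move/even_divP: He => He.
have HG : forall j, n - m < j -> mult g j = 0 by move=> j Hj; rewrite mult_out.
have Hub := up_bound HG (erefl _) Hb.
have Hda : da <= n by lia.
have Hle : forall i, mult g i <= n by move=> i; have := mult_le g i; lia.
have Hz : forall i, n <= i -> 1 <= i -> mult g i = 0.
  move=> i H1 H2; have [A B] := Hub i; nia.
have HR := mult_up Hda Hle Hz.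
split => //.
have HF : forall i, n < i -> mult (up n da g) i = 0 by move=> i Hi; rewrite mult_out.
have [[Hc1 Hc0 Hc3 Hc4] Ho] := (transfer HF HG (erefl _) HR Hm HK Hd d0).2 (conj Hb He).
have F1 : mult (up n da g) 1 = da by rewrite HR /= mul1n addn0.
apply/andP; split; last by rewrite F1 ltnn.
apply/andP; split; [exact/(base_condP _ _ _ K0) | exact/odd_divP].
Qed.

Lemma card_DC n m K d da :
  da <= m <= n -> da < K -> d %| da -> 0 < d ->
  #|[pred f : {ffun 'I_n -> 'I_n.+1} | Dp K d da m f]| =
  #|[pred g : {ffun 'I_(n - m) -> 'I_(n - m).+1} | Cp K d da m g]|.
Proof.
move=> Hm HK Hd d0.
have canDU : forall f, Dp K d da m f -> up n da (down (n - m) f) = f.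
  move=> f Df; apply: mult_inj => i.
  have [Cd HR] := D_down Hm HK Hd d0 Df.
  have [_ HR'] := C_up Hm HK Hd d0 Cd.
  by rewrite HR' HR.
have canUD : forall g, Cp K d da m g -> down (n - m) (up n da g) = g.
  move=> g Cg; apply: mult_inj => j.
  have [Dg HR] := C_up Hm HK Hd d0 Cg.
  have [_ HR'] := D_down Hm HK Hd d0 Dg.
  by have := HR j.+1; rewrite HR' /= => /addnI.
rewrite -(card_in_image (f := down (n - m))); last first.
  by move=> f1 f2 H1 H2 E; rewrite -(canDU f1) // E canDU.
apply: eq_card => g; rewrite inE; apply/imageP/idP => [[f Hf ->]|Hg].
  exact: (D_down Hm HK Hd d0 Hf).1.
by exists (up n da g); [exact: (C_up Hm HK Hd d0 Hg).1 | rewrite canUD].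
Qed.

Lemma Dp_range n m K d da (f : {ffun 'I_n -> 'I_n.+1}) :
  0 < K -> Dp K d da m f -> da <= m <= n.
Proof.
move=> K0 /andP[/andP[/(base_condP _ _ _ K0) [H1 H0 _ _] _] Hlt].
have HF : forall i, n.+1 <= i -> mult f i = 0 by move=> i Hi; rewrite mult_out.
have := term_le_sum (P := mult f) (i := 1) isT HF.
have := sum_le_wsum (mult f) n.+1.
lia.
Qed.

Unset Implicit Arguments.

Theorem mainTheorem5 (a k d e : nat) (m n : nat) :
  a <= k -> 1 <= d <= k -> (e = d \/ 2 * e = d) ->
  (Posz (bbar_count d (d * k + e) (d * a + d) (Posz m) (Posz n))
     - Posz (bbar_count d (d * k + e) (d * a) (Posz m) (Posz n)))%R
  = Posz (b_count d (d * k + e) (d * k - d * a + e)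
       (Posz m - Posz (d * a))%R (Posz n - Posz m)%R).
Proof.
move=> Hak /andP[d0 Hdk] He.
have e0 : 0 < e by case: He; lia.
set K := d * k + e; set da := d * a.
have HK : da < K by rewrite /K /da; have := leq_mul (leqnn d) Hak; lia.
have K0 : 0 < K by lia.
have Hd : d %| da by rewrite /da dvdn_mulr.
rewrite /bbar_count /=.
set A := [pred f : {ffun 'I_n -> 'I_n.+1} | base_cond K (da + d) m f && odd_div d f].
rewrite -(cardID [pred f : {ffun 'I_n -> 'I_n.+1} | mult f 1 < da] A).
have E1 : #|[predI A & [pred f : {ffun 'I_n -> 'I_n.+1} | mult f 1 < da]]| =
          #|[pred f : {ffun 'I_n -> 'I_n.+1} | base_cond K da m f && odd_div d f]|.
  apply: eq_card => f; rewrite !inE /base_cond.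
  case E: (mult f 1 < da); rewrite ?andbT ?andbF //.
  by rewrite (ltn_addr _ E) andbT.
have E2 : #|[predD A & [pred f : {ffun 'I_n -> 'I_n.+1} | mult f 1 < da]]| =
          #|[pred f : {ffun 'I_n -> 'I_n.+1} | Dp K d da m f]|.
  by apply: eq_card => f; rewrite !inE /Dp andbC.
rewrite E1 E2 PoszD addrC addKr.
have NK : d * k - da + e = K - da by rewrite /K /da; have := leq_mul (leqnn d) Hak; lia.
case: (boolP (da <= m <= n)) => Hm.
  have /andP[H1 H2] := Hm.
  rewrite subzn // subzn // /b_count NK card_DC //.
have -> : #|[pred f : {ffun 'I_n -> 'I_n.+1} | Dp K d da m f]| = 0.
  apply: eq_card0 => f; rewrite !inE; apply/negP => Df.
  by move: Hm; rewrite (Dp_range K0 Df).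
case: (leqP da m) => H1.
  have H2 : n < m by move: Hm; rewrite H1 /=; lia.
  case E: (Posz n - Posz m)%R => [z|z]; last by case: (Posz m - Posz da)%R.
  exfalso; move: E; lia.
case E: (Posz m - Posz da)%R => [z|z] //.
exfalso; move: E; lia.
Qed.
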